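(* Let $\pi,\pi'\in\mathbb P$ and let $F:[0,1]\cap\mathbb Q\to\mathbb Q$ be a piecewise linear continuous map with $F(0)=0$ and $F(1)\in a_0^{-1}\mathbb Z$. Assume $\pi(t)=\pi'(t)+F(t)\delta$ for all $t$. Then for each $w\in W$, $(S_w\pi)(t)=(S_w\pi')(t)+F(t)\delta$ for all $t\in[0,1]\cap\mathbb Q$.
   Context: $\mathfrak g$ is an affine Lie algebra over $\mathbb Q$ of affine type with index set $I$, simple coroots $h_j$, fundamental weights $\Lambda_j$, null root $\delta$, $a_0=2$ if $\mathfrak g$ is of type $A^{(2)}_{2\ell}$ and $a_0=1$ otherwise, Weyl group $W=\langle r_j\mid j\in I\rangle$, weight lattice $P=\bigoplus_j\mathbb Z\Lambda_j\oplus\mathbb Za_0^{-1}\delta$. $\mathbb P$ is the set of piecewise linear continuous maps $\pi:[0,1]\cap\mathbb Q\to\mathbb Q\otimes P$ with $\pi(0)=0$, $\pi(1)\in P$. $e_j,f_j$ ($j\in I$) are Littelmann's root operators on $\mathbb P\cup\{\mathbf0\}$. For $j\in I$, $S_j\pi=f_j^n\pi$ if $n=\pi(1)(h_j)\ge0$ and $S_j\pi=e_j^{-n}\pi$ if $n<0$; $w\mapsto S_w$ is the unique action of $W$ on $\mathbb P$ with $S_{r_j}=S_j$ (Littelmann). *)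

(* Defs.v *)
From mathcomp Require Import all_boot all_order all_algebra.
From Stdlib Require Import ClassicalEpsilon.
Set Implicit Arguments. Unset Strict Implicit. Unset Printing Implicit Defensive.
Import Order.TTheory GRing.Theory Num.Theory.
Local Open Scope ring_scope.

(* I : index set, i0 : the distinguished node "0",                     *)
(* A i j = a_{ij} = <h_i, alpha_j> (generalized Cartan matrix),        *)
(* a  : primitive positive integer null vector of A   (delta = sum a_j alpha_j), *)
(* av : primitive positive integer null vector of A^T (K = sum av_i h_i). *)
(* Kac's labelling of node 0 is characterised by av i0 = 1; then       *)
(* a i0 = 2 for A^{(2)}_{2l} and a i0 = 1 otherwise, i.e. a i0 = a_0.   *)

Definition is_GCM (I : finType) (A : I -> I -> int) : Prop :=
  [/\ forall i, A i i = 2,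
      forall i j, i != j -> A i j <= 0 &
      forall i j, (A i j == 0) = (A j i == 0)].

Definition indecomposable (I : finType) (A : I -> I -> int) : Prop :=
  forall J : {set I}, J != set0 -> J != setT ->
    exists i j, [/\ i \in J, j \notin J & A i j != 0].

Definition prim_null_vector (I : finType) (A : I -> I -> int) (c : I -> nat) :=
  [/\ forall j, (0 < c j)%N,
      forall i, \sum_(j : I) A i j * (c j)%:Z = 0 &
      \big[gcdn/0%N]_(j : I) c j = 1%N].

(* Kac, Thm 4.3: an indecomposable GCM is of affine type iff it has a
   positive null vector; a and av are the (unique) primitive ones. *)
Definition affine_datum (I : finType) (i0 : I) (A : I -> I -> int)
    (a av : I -> nat) : Prop :=
  [/\ is_GCM A, indecomposable A, prim_null_vector A a,
      prim_null_vector (fun i j => A j i) av & av i0 = 1%N].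

(* Weights: Q (x) P with basis Lambda_j (j : I) and delta (None).       *)
Definition weight (I : finType) := {ffun option I -> rat^o}.

Definition Lam (I : finType) (j : I) : weight I := [ffun k => (k == Some j)%:R].
Definition delta (I : finType) : weight I := [ffun k => (k == None)%:R].

(* lambda(h_j) *)
Definition pairh (I : finType) (lam : weight I) (j : I) : rat := lam (Some j).

Definition a0 (I : finType) (i0 : I) (a : I -> nat) : rat := (a i0)%:R.

Definition alpha (I : finType) (i0 : I) (A : I -> I -> int) (a : I -> nat)
    (j : I) : weight I :=
  \sum_(i : I) ((A i j)%:~R : rat) *: Lam i
  + (if j == i0 then (a0 i0 a)^-1 else 0) *: delta I.

Definition in_P (I : finType) (i0 : I) (a : I -> nat) (lam : weight I) : Prop :=
  (forall j : I, lam (Some j) \is a Num.int) /\ (a0 i0 a * lam None \is a Num.int).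

Definition refl (I : finType) (i0 : I) (A : I -> I -> int) (a : I -> nat)
    (j : I) (lam : weight I) : weight I :=
  lam - pairh lam j *: alpha i0 A a j.

Definition in01 (t : rat) : bool := (0 <= t <= 1).

Definition piecewise_linear (V : lmodType rat) (f : rat -> V) : Prop :=
  exists (n : nat) (s : nat -> rat),
    [/\ s 0%N = 0, s n = 1,
        forall k, (k < n)%N -> s k < s k.+1 &
        forall k t, (k < n)%N -> s k <= t <= s k.+1 ->
          f t = f (s k) + ((t - s k) / (s k.+1 - s k)) *: (f (s k.+1) - f (s k))].

Definition path_ (I : finType) := rat -> weight I.

Definition is_LS_path (I : finType) (i0 : I) (a : I -> nat) (p : path_ I) : Prop :=
  [/\ piecewise_linear p, p 0 = 0 & in_P i0 a (p 1)].

Definition the_min (P : rat -> Prop) : rat :=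
  epsilon (inhabits 0) (fun x => P x /\ forall y, P y -> x <= y).
Definition the_max (P : rat -> Prop) : rat :=
  epsilon (inhabits 0) (fun x => P x /\ forall y, P y -> y <= x).

Section RootOps.
Variables (I : finType) (i0 : I) (A : I -> I -> int) (a : I -> nat).

Definition hfun (j : I) (p : path_ I) (t : rat) : rat := pairh (p t) j.
Definition hmin (j : I) (p : path_ I) : rat :=
  the_min (fun m => exists2 t, in01 t & hfun j p t = m).

(* Littelmann's raising operator e_j (None stands for the zero element 0) *)
Definition e_op (j : I) (p : path_ I) : option (path_ I) :=
  let h := hfun j p in
  let m := hmin j p in
  if -1 < m then None else
  let t1 := the_min (fun t => in01 t /\ h t = m) in
  let t0 := the_max (fun t => 0 <= t <= t1 /\
                       forall s, 0 <= s <= t -> m + 1 <= h s) in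
  Some (fun t => if t <= t0 then p t
                 else if t <= t1 then p t0 + refl i0 A a j (p t - p t0)
                 else p t + alpha i0 A a j).

Definition f_op (j : I) (p : path_ I) : option (path_ I) :=
  let h := hfun j p in
  let m := hmin j p in
  if h 1 - m < 1 then None else
  let t0 := the_max (fun t => in01 t /\ h t = m) in
  let t1 := the_min (fun t => t0 <= t <= 1 /\
                       forall s, t <= s <= 1 -> m + 1 <= h s) in
  Some (fun t => if t <= t0 then p t
                 else if t <= t1 then p t0 + refl i0 A a j (p t - p t0)
                 else p t - alpha i0 A a j).

Definition S_op (j : I) (p : path_ I) : option (path_ I) :=
  let n : int := numq (pairh (p 1) j) in
  if (0 <= n)%R then iter `|n|%N (obind (f_op j)) (Some p)
  else iter `|n|%N (obind (e_op j)) (Some p).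

(* S_w for w = r_{j_1} ... r_{j_k} given by the word [:: j_1; ...; j_k]:
   S_w = S_{j_1} o ... o S_{j_k}. *)
Definition S_word (w : seq I) (p : path_ I) : option (path_ I) :=
  foldr (fun j acc => obind (S_op j) acc) (Some p) w.

End RootOps.

(* The conclusion relation: both sides are paths (or both 0) and they
   differ by F(t) delta on [0,1] cap Q. *)
Definition shifted_by (I : finType) (F : rat -> rat) (p p' : path_ I) : Prop :=
  forall t, in01 t -> p t = p' t + F t *: delta I.

Definition orel (T : Type) (R : T -> T -> Prop) (x y : option T) : Prop :=
  match x, y with
  | Some u, Some v => R u v
  | None, None => True
  | _, _ => False
  end.

(* Main.v *)
Require Import Defs.
From mathcomp Require Import all_boot all_order all_algebra.
From mathcomp Require Import ring lra.
From Stdlib Require Import ClassicalEpsilon.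
Set Implicit Arguments. Unset Strict Implicit. Unset Printing Implicit Defensive.
Import Order.TTheory GRing.Theory Num.Theory.
Local Open Scope ring_scope.

Lemma pairhD (I : finType) (u v : weight I) j : pairh (u + v) j = pairh u j + pairh v j.
Proof. by rewrite /pairh !ffunE. Qed.
Lemma pairhN (I : finType) (u : weight I) j : pairh (- u) j = - pairh u j.
Proof. by rewrite /pairh !ffunE. Qed.
Lemma pairhZ (I : finType) (u : weight I) k j : pairh (k *: u) j = k * pairh u j.
Proof. by rewrite /pairh !ffunE. Qed.
Lemma pairh_delta (I : finType) j : pairh (delta I) j = 0.
Proof. by rewrite /pairh /delta !ffunE. Qed.
Lemma pairh0 (I : finType) j : pairh (0 : weight I) j = 0.
Proof. by rewrite /pairh !ffunE. Qed.

Lemma the_min_eq (P : rat -> Prop) x : P x -> (forall y, P y -> x <= y) -> the_min P = x.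
Proof.
move=> Px Hx; rewrite /the_min.
have [] := epsilon_spec (inhabits 0) (fun x => P x /\ forall y, P y -> x <= y) (ex_intro _ x (conj Px Hx)).
move=> Pe He; apply/eqP; rewrite eq_le He // Hx //.
Qed.
Lemma the_max_eq (P : rat -> Prop) x : P x -> (forall y, P y -> y <= x) -> the_max P = x.
Proof.
move=> Px Hx; rewrite /the_max.
have [] := epsilon_spec (inhabits 0) (fun x => P x /\ forall y, P y -> y <= x) (ex_intro _ x (conj Px Hx)).
move=> Pe He; apply/eqP; rewrite eq_le He // Hx //.
Qed.

Lemma conv_ge (a u v l : rat) : 0 <= l -> l <= 1 -> a <= u -> a <= v -> a <= u + l * (v - u).
Proof. move=> *; nra. Qed.

Lemma lam01 (x t z : rat) : x <= t -> t <= z -> 0 <= (t - x) / (z - x) <= 1.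
Proof.
move=> h1 h2; have [->|ne] := eqVneq z x.
  by rewrite subrr invr0 mulr0 lexx ler01.
have zx : 0 < z - x by rewrite subr_gt0 lt_def ne (le_trans h1 h2).
apply/andP; split; first by apply: divr_ge0; lra.
rewrite ler_pdivrMr // mul1r; lra.
Qed.
Lemma seq_best (T : eqType) (key : T -> rat) (P : pred T) (s : seq T) :
  has P s -> exists x, [/\ x \in s, P x & forall c, c \in s -> P c -> key c <= key x].
Proof.
elim: s => [//|a s IH] /=.
case Ps: (has P s).
  move=> _; have [x [xs Px Hx]] := IH Ps.
  case Pa: (P a).
    case: (lerP (key a) (key x)) => ka.
      exists x; split => //; first by rewrite in_cons xs orbT.
      by move=> c; rewrite in_cons => /orP [/eqP ->|cs] //; apply: Hx.
    exists a; split => //; first by rewrite in_cons eqxx.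
    move=> c; rewrite in_cons => /orP [/eqP ->|cs] // Pc.
    by apply: le_trans (Hx c cs Pc) (ltW ka).
  exists x; split => //; first by rewrite in_cons xs orbT.
  move=> c; rewrite in_cons => /orP [/eqP ->|cs]; first by rewrite Pa.
  exact: Hx.
rewrite orbF => Pa; exists a; split => //; first by rewrite in_cons eqxx.
move=> c; rewrite in_cons => /orP [/eqP ->|cs] // Pc.
by move/hasPn: Ps => /(_ c cs); rewrite Pc.
Qed.

Definition Lfree (L : seq rat) (x z : rat) := forall l, l \in L -> ~~ ((x < l) && (l < z)).
Definition PLs (g : rat -> rat) (L : seq rat) :=
  forall x y z, 0 <= x -> x <= y -> y <= z -> z <= 1 -> Lfree L x z ->
    g y = g x + (y - x) / (z - x) * (g z - g x).

Lemma piece g L (C : seq rat) t : PLs g L -> (forall c, c \in C -> in01 c) ->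
  0 \in C -> 1 \in C -> (forall l, l \in L -> in01 l -> l \in C) -> in01 t ->
  exists x z, [/\ x \in C, z \in C, x <= t <= z,
     (forall c, c \in C -> (c <= t -> c <= x) /\ (t <= c -> z <= c)) &
     g t = g x + (t - x) / (z - x) * (g z - g x)].
Proof.
move=> Hg HC C0 C1 HL /andP [t0 t1].
have [x [xC xt Hx]] := @seq_best _ id (fun c => c <= t) C (introT hasP (ex_intro2 _ _ 0 C0 t0)).
have [z [zC zt Hz]] := @seq_best _ (fun c => - c) (fun c => t <= c) C (introT hasP (ex_intro2 _ _ 1 C1 t1)).
have Hz' : forall c, c \in C -> t <= c -> z <= c by move=> c cC tc; have := Hz c cC tc; rewrite lerN2.
exists x, z; split => //; first by rewrite xt zt.
  by move=> c cC; split; [exact: Hx | exact: Hz'].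
have /andP [x0 _] := HC x xC; have /andP [_ z1] := HC z zC.
apply: Hg => //.
move=> l lL; apply/negP => /andP [xl lz].
have l01 : in01 l by rewrite /in01; apply/andP; split; lra.
have lC := HL l lL l01.
case: (lerP l t) => lt.
  by have := Hx l lC lt; lra.
by have := Hz' l lC (ltW lt); lra.
Qed.
Definition cands (L : seq rat) (e : seq rat) := 0 :: 1 :: [seq l <- e ++ L | in01 l].

Lemma cands01 L e : (forall l, l \in e -> in01 l) -> forall c, c \in cands L e -> in01 c.
Proof.
move=> He c; rewrite !in_cons mem_filter => /orP [/eqP ->|/orP [/eqP ->|/andP [] //]];
  by rewrite /in01 ?lexx ?ler01.
Qed.
Lemma cands0 L e : 0 \in cands L e. Proof. by rewrite in_cons eqxx. Qed.
Lemma cands1 L e : 1 \in cands L e. Proof. by rewrite !in_cons eqxx orbT. Qed.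
Lemma candsL L e : forall l, l \in L -> in01 l -> l \in cands L e.
Proof. by move=> l lL l01; rewrite !in_cons mem_filter l01 mem_cat lL !orbT. Qed.
Lemma candse L e : forall l, l \in e -> in01 l -> l \in cands L e.
Proof. by move=> l lL l01; rewrite !in_cons mem_filter l01 mem_cat lL !orbT. Qed.

Lemma PLs_min g L : PLs g L ->
  exists m, (exists2 t, in01 t & g t = m) /\ forall t, in01 t -> m <= g t.
Proof.
move=> Hg.
have [c [cC _ Hc]] := @seq_best _ (fun c => - g c) predT (cands L [::]) (introT hasP (ex_intro2 _ _ 0 (cands0 _ _) isT)).
exists (g c); split; first by exists c => //; apply: cands01 cC.
move=> t t01.
have He : forall l, l \in [::] -> in01 l by [].
have [x [z [xC zC /andP [xt tz] _ ->]]] := piece Hg (cands01 He) (cands0 _ _) (cands1 _ _) (@candsL L [::]) t01.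
have /andP [l0 l1] := lam01 xt tz.
apply: conv_ge => //.
  by have := Hc x xC isT; rewrite lerN2.
by have := Hc z zC isT; rewrite lerN2.
Qed.

Lemma tri (a u v l : rat) : a <= u -> a <= v -> 0 <= l <= 1 -> u + l * (v - u) = a ->
  (u = a /\ v = a) \/ l = 0 \/ l = 1.
Proof.
move=> au av /andP [l0 l1] E.
case: (eqVneq u a) => [ua|ua]; case: (eqVneq v a) => [va|va].
- by left.
- right; left; subst u.
  have : l * (v - a) = 0 by lra.
  by move/eqP; rewrite mulf_eq0 subr_eq0 (negbTE va) orbF => /eqP.
- right; right; subst v.
  have : (1 - l) * (u - a) = 0 by lra.
  by move/eqP; rewrite mulf_eq0 !subr_eq0 (negbTE ua) orbF => /eqP ->.
- exfalso.
  have hu : a < u by rewrite lt_def ua au.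
  have hv : a < v by rewrite lt_def va av.
  case: (eqVneq l 0) => [l0'|l0']; first by subst l; lra.
  have lp : 0 < l by rewrite lt_def l0' l0.
  have h1 : 0 < l * (v - a) by rewrite mulr_gt0 // subr_gt0.
  have h2 : 0 <= (1 - l) * (u - a) by rewrite mulr_ge0 // subr_ge0 // ltW.
  nra.
Qed.

Lemma lam_eq0 (x t z : rat) : x <= t -> t <= z -> (t - x) / (z - x) = 0 -> t = x.
Proof.
move=> h1 h2 /eqP; rewrite mulf_eq0 invr_eq0 !subr_eq0 => /orP [/eqP //|/eqP zx].
lra.
Qed.
Lemma lam_eq1 (x t z : rat) : x <= t -> t <= z -> (t - x) / (z - x) = 1 -> t = z.
Proof.
move=> h1 h2; case: (eqVneq z x) => [zx|zx]; first lra.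
have zx' : z - x != 0 by rewrite subr_eq0.
move/(congr1 (fun r => r * (z - x))); rewrite mulfVK // mul1r; lra.
Qed.

Lemma level_near g L e m t : PLs g L -> (forall l, l \in e -> in01 l) ->
  (forall t, in01 t -> m <= g t) -> in01 t -> g t = m ->
  (exists c, [/\ c \in cands L e, g c = m & t <= c]) /\
  (exists c, [/\ c \in cands L e, g c = m & c <= t]).
Proof.
move=> Hg He Hm t01 gt.
have [x [z [xC zC /andP [xt tz] _ E]]] := piece Hg (cands01 He) (cands0 _ _) (cands1 _ _) (@candsL L e) t01.
have := tri (Hm x (cands01 He xC)) (Hm z (cands01 He zC)) (lam01 xt tz).
rewrite -E gt => /(_ erefl) [[gx gz]|[/(lam_eq0 xt tz) tx|/(lam_eq1 xt tz) tz']].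
- by split; [exists z | exists x].
- by subst t; split; exists x.
- by subst t; split; exists z.
Qed.

Lemma level_max g L m t : PLs g L ->
  (forall t, in01 t -> m <= g t) -> in01 t -> g t = m ->
  exists T, [/\ in01 T, g T = m & forall s, in01 s -> g s = m -> s <= T].
Proof.
move=> Hg Hm t01 gt.
have He : forall l, l \in [::] -> in01 l by [].
have [[c [cC gc _]] _] := level_near Hg He Hm t01 gt.
have [T [TC /eqP gT HT]] := @seq_best _ id (fun c => g c == m) (cands L [::]) (introT hasP (ex_intro2 _ _ c cC (introT eqP gc))).
exists T; split => //; first exact: cands01 TC.
move=> s s01 gs; have [[c' [c'C gc' sc']] _] := level_near Hg He Hm s01 gs.
by apply: le_trans sc' (HT c' c'C (introT eqP gc')).
Qed.

Lemma level_min g L m t : PLs g L ->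
  (forall t, in01 t -> m <= g t) -> in01 t -> g t = m ->
  exists T, [/\ in01 T, g T = m & forall s, in01 s -> g s = m -> T <= s].
Proof.
move=> Hg Hm t01 gt.
have He : forall l, l \in [::] -> in01 l by [].
have [_ [c [cC gc _]]] := level_near Hg He Hm t01 gt.
have [T [TC /eqP gT HT]] := @seq_best _ (fun c => - c) (fun c => g c == m) (cands L [::]) (introT hasP (ex_intro2 _ _ c cC (introT eqP gc))).
exists T; split => //; first exact: cands01 TC.
move=> s s01 gs; have [_ [c' [c'C gc' sc']]] := level_near Hg He Hm s01 gs.
by apply: le_trans _ sc'; have := HT c' c'C (introT eqP gc'); rewrite lerN2.
Qed.
Lemma cross g L lo c0 : PLs g L -> in01 lo -> g lo < c0 -> c0 <= g 1 ->
  exists y, [/\ lo < y, y <= 1, g y = c0 &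
    forall t, lo <= t -> t <= 1 ->
      ((forall s, t <= s -> s <= 1 -> c0 <= g s) <-> y <= t)].
Proof.
move=> Hg lo01 glo gc1.
have He : forall l, l \in [:: lo] -> in01 l by move=> l; rewrite inE => /eqP ->.
pose C := cands L [:: lo].
have loC : lo \in C by apply: candse => //; rewrite inE.
have C01 := @cands01 L _ He.
have [w [wC /andP [low gw] Hw]] := @seq_best _ id (fun c => (lo <= c) && (g c < c0)) C
   (introT hasP (ex_intro2 _ _ lo loC (introT andP (conj (lexx lo) glo)))).
have /andP [w0 w1] := C01 w wC.
have w1' : w < 1 by rewrite lt_def w1 andbT; apply/eqP => e; move: gw; rewrite -e; lra.
have [z [zC wz Hz]] := @seq_best _ (fun c => - c) (fun c => w < c) C
   (introT hasP (ex_intro2 _ _ 1 (cands1 _ _) w1')).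
have Hz' : forall c, c \in C -> w < c -> z <= c by move=> c cC tc; have := Hz c cC tc; rewrite lerN2.
have /andP [z0 z1] := C01 z zC.
have gz : c0 <= g z.
  rewrite leNgt; apply/negP => gz.
  have := Hw z zC; rewrite gz andbT => /(_ (le_trans low (ltW wz))); lra.
have Lf : Lfree L w z.
  move=> l lL; apply/negP => /andP [wl lz].
  have l01 : in01 l by rewrite /in01; apply/andP; split; lra.
  by have := Hz' l (@candsL L [:: lo] l lL l01) wl; lra.
have aff : forall s, w <= s -> s <= z -> g s = g w + (s - w) / (z - w) * (g z - g w).
  by move=> s ws sz; apply: Hg.
have zw : z - w != 0 by rewrite subr_eq0 gt_eqF.
have gzw : g z - g w != 0 by rewrite subr_eq0 gt_eqF //; lra.
pose y := w + (c0 - g w) / (g z - g w) * (z - w).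
have key : forall s, w <= s -> s <= z -> g s = c0 + (s - y) * ((g z - g w) / (z - w)).
  move=> s ws sz; rewrite aff // /y; field; apply/andP; split => //.
have k0 : 0 < (c0 - g w) / (g z - g w) by apply: divr_gt0; lra.
have k1 : (c0 - g w) / (g z - g w) <= 1 by rewrite ler_pdivrMr ?mul1r; lra.
have wy : w < y by rewrite /y ltrDl; apply: mulr_gt0 => //; lra.
have yz : y <= z.
  rewrite /y -lerBrDl; apply: le_trans (_ : 1 * (z - w) <= _); last by rewrite mul1r.
  by apply: ler_wpM2r => //; lra.
have sl : 0 < (g z - g w) / (z - w) by apply: divr_gt0; lra.
exists y; split.
- exact: le_lt_trans low wy.
- exact: le_trans yz z1.
- by rewrite key ?subrr ?mul0r ?addr0 //; apply: ltW.
move=> t lot t1; split.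
  move=> H; rewrite leNgt; apply/negP => ty.
  case: (lerP t w) => tw.
    by have := H w tw w1; lra.
  have := H t (lexx t) t1; rewrite key; [|exact: ltW|exact: le_trans (ltW ty) yz].
  have : (t - y) * ((g z - g w) / (z - w)) < 0 by rewrite pmulr_llt0 // subr_lt0.
  lra.
move=> yt s ts s1.
case: (lerP s z) => sz.
  rewrite key; [|lra|done].
  have : 0 <= (s - y) * ((g z - g w) / (z - w)) by apply: mulr_ge0; lra.
  lra.
have s01 : in01 s by rewrite /in01; apply/andP; split; lra.
have [x' [z' [x'C z'C /andP [xs sz'] Hn ->]]] := piece Hg C01 (cands0 _ _) (cands1 _ _) (@candsL L [:: lo]) s01.
have zx' : z <= x' by have [h _] := Hn z zC; apply: h; exact: ltW.
have gx' : c0 <= g x'.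
  rewrite leNgt; apply/negP => gx.
  have := Hw x' x'C; rewrite gx andbT => /(_ (le_trans low (le_trans (ltW wz) zx'))); lra.
have gz' : c0 <= g z'.
  rewrite leNgt; apply/negP => gx.
  have := Hw z' z'C; rewrite gx andbT => /(_ (le_trans low (le_trans (ltW wz) (le_trans (ltW sz) sz')))); lra.
have /andP [l0 l1] := lam01 xs sz'.
exact: conv_ge.
Qed.
Lemma PLs_mirror g L : PLs g L -> PLs (fun t => g (1 - t)) [seq 1 - l | l <- L].
Proof.
move=> Hg x y z x0 xy yz z1 Lf.
have Lf' : Lfree L (1 - z) (1 - x).
  move=> l lL; have := Lf (1 - l) (map_f _ lL); apply: contra => /andP [h1 h2].
  apply/andP; split; lra.
have := Hg (1 - z) (1 - y) (1 - x); rewrite !subr_ge0 lerBlDr lerBrDr => -> //; try lra.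
case: (eqVneq z x) => [zx|zx].
  have -> : y = x by lra.
  subst z; rewrite !subrr !mul0r !addr0; ring.
have zx' : z - x != 0 by rewrite subr_eq0.
have -> : 1 - y - (1 - z) = z - y by ring.
have -> : 1 - x - (1 - z) = z - x by ring.
by field.
Qed.

Lemma cross_l g L hi c0 : PLs g L -> in01 hi -> g hi < c0 -> c0 <= g 0 ->
  exists y, [/\ 0 <= y, y < hi, g y = c0 &
    forall t, 0 <= t -> t <= hi ->
      ((forall s, 0 <= s -> s <= t -> c0 <= g s) <-> t <= y)].
Proof.
move=> Hg /andP [h0 h1] ghi g0.
have Hg' := PLs_mirror Hg.
have lo01 : in01 (1 - hi) by rewrite /in01; apply/andP; split; lra.
have e1 : (fun t => g (1 - t)) (1 - hi) < c0 by rewrite /= (_ : 1 - (1 - hi) = hi) //; ring.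
have e2 : c0 <= (fun t => g (1 - t)) 1 by rewrite /= subrr.
have [y [ly y1 gy H]] := cross Hg' lo01 e1 e2.
exists (1 - y); split.
- lra.
- lra.
- done.
move=> t t0 th.
have := H (1 - t) ltac:(lra) ltac:(lra).
move=> [H1 H2]; split.
  move=> Hs; have : y <= 1 - t.
    apply: H1 => s ts s1; have := Hs (1 - s) ltac:(lra) ltac:(lra); by [].
  lra.
move=> ty s s0 st.
have := H2 ltac:(lra) (1 - s) ltac:(lra) ltac:(lra).
by rewrite opprB addrC subrK.
Qed.
Definition PLv (I : finType) (q : path_ I) (L : seq rat) :=
  forall x y z, 0 <= x -> x <= y -> y <= z -> z <= 1 -> Lfree L x z ->
    q y = q x + ((y - x) / (z - x)) *: (q z - q x).

Definition Inv (I : finType) (q : path_ I) := (exists L, PLv q L) /\ q 0 = 0.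

Lemma PLv_hfun (I : finType) (q : path_ I) L j : PLv q L -> PLs (hfun j q) L.
Proof.
move=> Hq x y z x0 xy yz z1 Lf; rewrite /hfun /pairh (Hq x y z) // !ffunE.
by [].
Qed.

Lemma PL_PLv (I : finType) (p : path_ I) : piecewise_linear p -> exists L, PLv p L.
Proof.
move=> [n [s [s0 sn sinc aff]]].
exists (mkseq s n.+1) => x y z x0 xy yz z1 Lf.
case: (eqVneq x z) => [xz|xz].
  have -> : y = x by lra.
  by subst z; rewrite !subrr mul0r scale0r addr0.
have xz' : x < z by rewrite lt_def eq_sym xz (le_trans xy yz).
have n0 : (0 < n)%N.
  rewrite lt0n; apply/negP => /eqP n0; move: sn; rewrite n0 s0 => /eqP.
  by rewrite eq_sym oner_eq0.
have h0 : (0 \in iota 0 n)%N by rewrite mem_iota add0n.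
have hs0 : s 0%N <= x by rewrite s0.
have [k [kI sk Hk]] := @seq_best _ (fun k => k%:R) (fun k => s k <= x) (iota 0 n)
  (introT hasP (ex_intro2 _ _ 0%N h0 hs0)).
have kn : (k < n)%N by move: kI; rewrite mem_iota add0n.
have xk1 : x < s k.+1.
  case: (ltnP k.+1 n) => kn1.
    rewrite ltNge; apply/negP => h.
    have := Hk k.+1 ltac:(by rewrite mem_iota add0n) h; rewrite ler_nat ltnn //.
  have -> : k.+1 = n by apply/eqP; rewrite eqn_leq kn1 kn.
  by rewrite sn; lra.
have zk1 : z <= s k.+1.
  have := Lf (s k.+1) ltac:(by rewrite /mkseq; apply: map_f; rewrite mem_iota add0n ltnS).
  by rewrite xk1 /= -leNgt.
have d0 : s k.+1 - s k != 0 by rewrite subr_eq0 gt_eqF // sinc.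
have xz0 : z - x != 0 by rewrite subr_eq0 gt_eqF.
rewrite (aff k x kn); last by rewrite sk (ltW xk1).
rewrite (aff k y kn); last by rewrite (le_trans sk xy) (le_trans yz zk1).
rewrite (aff k z kn); last by rewrite (le_trans sk (le_trans xy yz)) zk1.
set d := s k.+1 - s k.
have E : (y - s k) / d = (x - s k) / d + (y - x) / (z - x) * ((z - s k) / d - (x - s k) / d).
  by field; rewrite d0 xz0.
rewrite E; apply/ffunP => i; rewrite !ffunE /GRing.scale /=; ring.
Qed.
Ltac vec := apply/ffunP => ?; rewrite !ffunE /GRing.scale /=; ring.

Section R.
Variables (I : finType) (i0 : I) (A : I -> I -> int) (a : I -> nat) (j : I).
Local Notation rf := (refl i0 A a j).

Lemma reflD u v : rf (u + v) = rf u + rf v.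
Proof. rewrite /refl pairhD; vec. Qed.
Lemma reflZ k u : rf (k *: u) = k *: rf u.
Proof. rewrite /refl pairhZ; vec. Qed.
Lemma reflB u v : rf (u - v) = rf u - rf v.
Proof. rewrite /refl pairhD pairhN; vec. Qed.
Lemma refl_delta : rf (delta I) = delta I.
Proof. rewrite /refl pairh_delta; vec. Qed.
Lemma refl_cont (u v : weight I) : u + rf (v - u) = v - (pairh v j - pairh u j) *: alpha i0 A a j.
Proof. rewrite /refl pairhD pairhN; vec. Qed.

Definition Rp (q : path_ I) (x0 x1 : rat) (b : weight I) : path_ I :=
  fun t => if t <= x0 then q t else if t <= x1 then q x0 + rf (q t - q x0) else q t + b.

Lemma transfer (q r : path_ I) x y z (c : weight I) (l : weight I -> weight I) :
  (forall u v, l (u + v) = l u + l v) -> (forall k u, l (k *: u) = k *: l u) ->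
  (forall u, x <= u -> u <= z -> r u = c + l (q u)) -> x <= y -> y <= z ->
  q y = q x + ((y - x) / (z - x)) *: (q z - q x) ->
  r y = r x + ((y - x) / (z - x)) *: (r z - r x).
Proof.
move=> lD lZ Hr xy yz Hq.
have xz := le_trans xy yz.
rewrite !Hr ?lexx // Hq lD lZ.
have lN : forall u, l (- u) = - l u by move=> u; rewrite -scaleN1r lZ scaleN1r.
rewrite lD lN; vec.
Qed.

Lemma R_Inv q x0 x1 b : Inv q -> 0 <= x0 -> x0 < x1 -> x1 <= 1 ->
  q x0 + rf (q x1 - q x0) = q x1 + b -> Inv (Rp q x0 x1 b).
Proof.
move=> [[L HL] q0] h0 h01 h1 Hc; split; last by rewrite /Rp h0.
exists (x0 :: x1 :: L) => x y z x0' xy yz z1 Lf.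
have Lf0 := Lf x0 (mem_head _ _).
have Lf1 := Lf x1 ltac:(by rewrite !inE eqxx orbT).
have LfL : Lfree L x z by move=> l lL; apply: Lf; rewrite !inE lL !orbT.
have Hq := HL x y z x0' xy yz z1 LfL.
have idD : forall u v : weight I, id (u + v) = id u + id v by [].
have idZ : forall k (u : weight I), id (k *: u) = k *: id u by [].
case: (lerP z x0) => zx0.
  apply: (@transfer q _ x y z 0 id) => // u xu uz.
  by rewrite /Rp (le_trans uz zx0) add0r.
have x0x : x0 <= x by move: Lf0; rewrite zx0 andbT -leNgt.
case: (lerP z x1) => zx1.
  apply: (@transfer q _ x y z (q x0 - rf (q x0)) rf) => //; [exact: reflD|exact: reflZ|].
  move=> u xu uz; rewrite /Rp (le_trans uz zx1).
  case: ifP => ux0.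
    have -> : u = x0 by apply/eqP; rewrite eq_le ux0 (le_trans x0x xu).
    vec.
  rewrite reflB; vec.
have x1x : x1 <= x by move: Lf1; rewrite zx1 andbT -leNgt.
apply: (@transfer q _ x y z b id) => // u xu uz.
rewrite /Rp.
have ux0 : (u <= x0) = false by apply/negbTE; rewrite -ltNge; apply: lt_le_trans h01 (le_trans x1x xu).
rewrite ux0; case: ifP => ux1.
  have -> : u = x1 by apply/eqP; rewrite eq_le ux1 (le_trans x1x xu).
  rewrite Hc /=; vec.
rewrite /=; vec.
Qed.

Lemma R_shift (F : rat -> rat^o) q q' x0 x1 b : shifted_by F q q' -> in01 x0 ->
  shifted_by F (Rp q x0 x1 b) (Rp q' x0 x1 b).
Proof.
move=> Hs h0 t t01; rewrite /Rp.
case: ifP => _; first exact: Hs.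
case: ifP => _.
  rewrite (Hs t t01) (Hs x0 h0).
  have -> : q' t + F t *: delta I - (q' x0 + F x0 *: delta I) = (q' t - q' x0) + (F t - F x0) *: delta I by vec.
  rewrite reflD reflZ refl_delta; vec.
rewrite (Hs t t01); vec.
Qed.
End R.
Section Step.
Variables (I : finType) (i0 : I) (A : I -> I -> int) (a : I -> nat) (F : rat -> rat^o).

Definition Rel (q q' : path_ I) := shifted_by F q q' /\ Inv q /\ Inv q'.

Lemma hfun_sh (q q' : path_ I) (j : I) t : shifted_by F q q' -> in01 t -> hfun j q' t = hfun j q t.
Proof. by move=> Hs t01; rewrite /hfun (Hs t t01) pairhD pairhZ pairh_delta mulr0 addr0. Qed.

Lemma f_step (j : I) (q q' : path_ I) : Rel q q' -> orel Rel (f_op i0 A a j q) (f_op i0 A a j q').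
Proof.
move=> [Hs [[[L HL] q0] [[L' HL'] q0']]].
have Hg := PLv_hfun j HL.
have hg := fun t => @hfun_sh q q' j t Hs.
have o1 : in01 1 by rewrite /in01 ler01 lexx.
have [m [[tm tm01 gtm] Hm]] := PLs_min Hg.
have hm : hmin j q = m.
  apply: the_min_eq; first by exists tm.
  by move=> y [t t01 <-]; apply: Hm.
have hm' : hmin j q' = m.
  apply: the_min_eq; first by exists tm => //; rewrite hg.
  by move=> y [t t01 <-]; rewrite hg //; apply: Hm.
rewrite /f_op /= hm hm' (hg 1 o1).
case: ifP => // cond.
have g1 : m + 1 <= hfun j q 1 by move/negbT: cond; rewrite -leNgt; lra.
have [T0 [T001 gT0 HT0]] := level_max Hg Hm tm01 gtm.
have e0 : the_max (fun t => in01 t /\ hfun j q t = m) = T0.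
  by apply: the_max_eq => // y [y01 gy]; apply: HT0.
have e0' : the_max (fun t => in01 t /\ hfun j q' t = m) = T0.
  apply: the_max_eq; first by rewrite hg.
  by move=> y [y01 gy]; apply: HT0; rewrite // -hg.
rewrite e0 e0'.
have gT0' : hfun j q T0 < m + 1 by rewrite gT0; lra.
have [Y [T0Y Y1 gY HY]] := cross Hg T001 gT0' g1.
have /andP [T0p _] := T001.
have e1 : the_min (fun t => T0 <= t <= 1 /\ forall s, t <= s <= 1 -> m + 1 <= hfun j q s) = Y.
  apply: the_min_eq.
    split; first by rewrite (ltW T0Y) Y1.
    by move=> s /andP [ys s1]; apply: (proj2 (HY Y (ltW T0Y) Y1) (lexx Y)).
  move=> t [/andP [T0t t1] H]; apply: (proj1 (HY t T0t t1)) => s ts s1; by apply: H; rewrite ts s1.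
have e1' : the_min (fun t => T0 <= t <= 1 /\ forall s, t <= s <= 1 -> m + 1 <= hfun j q' s) = Y.
  apply: the_min_eq.
    split; first by rewrite (ltW T0Y) Y1.
    move=> s2 /andP [ys2 s21]; rewrite hg; last by rewrite /in01 s21 andbT; lra.
    by apply: (proj2 (HY Y (ltW T0Y) Y1) (lexx Y)).
  move=> t [/andP [T0t t1] H]; apply: (proj1 (HY t T0t t1)) => s ts s1.
  by rewrite -hg; [apply: H; rewrite ts s1 | rewrite /in01 s1 andbT; lra].
rewrite e1 e1'.
have Y01 : in01 Y by rewrite /in01 Y1 andbT; lra.
split; first by apply: R_shift.
split.
  apply: (R_Inv (conj (ex_intro _ L HL) q0)) => //.
  rewrite refl_cont; congr (_ - _).
  by rewrite -/(hfun j q Y) -/(hfun j q T0) gY gT0 addrAC subrr add0r scale1r.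
apply: (R_Inv (conj (ex_intro _ L' HL') q0')) => //.
rewrite refl_cont; congr (_ - _).
by rewrite -/(hfun j q' Y) -/(hfun j q' T0) !hg // gY gT0 addrAC subrr add0r scale1r.
Qed.

Lemma e_step (j : I) (q q' : path_ I) : Rel q q' -> orel Rel (e_op i0 A a j q) (e_op i0 A a j q').
Proof.
move=> [Hs [[[L HL] q0] [[L' HL'] q0']]].
have Hg := PLv_hfun j HL.
have hg := fun t => @hfun_sh q q' j t Hs.
have [m [[tm tm01 gtm] Hm]] := PLs_min Hg.
have hm : hmin j q = m.
  apply: the_min_eq; first by exists tm.
  by move=> y [t t01 <-]; apply: Hm.
have hm' : hmin j q' = m.
  apply: the_min_eq; first by exists tm => //; rewrite hg.
  by move=> y [t t01 <-]; rewrite hg //; apply: Hm.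
rewrite /e_op /= hm hm'.
case: ifP => // cond.
have m1 : m <= -1 by move/negbT: cond; rewrite -leNgt.
have [T1 [T101 gT1 HT1]] := level_min Hg Hm tm01 gtm.
have e1 : the_min (fun t => in01 t /\ hfun j q t = m) = T1.
  by apply: the_min_eq => // y [y01 gy]; apply: HT1.
have e1' : the_min (fun t => in01 t /\ hfun j q' t = m) = T1.
  apply: the_min_eq; first by rewrite hg.
  by move=> y [y01 gy]; apply: HT1; rewrite // -hg.
rewrite e1 e1'.
have gT1' : hfun j q T1 < m + 1 by rewrite gT1; lra.
have g0 : m + 1 <= hfun j q 0 by rewrite /hfun q0 pairh0; lra.
have [Y [Y0 YT1 gY HY]] := cross_l Hg T101 gT1' g0.
have /andP [_ T11] := T101.
have e0 : the_max (fun t => 0 <= t <= T1 /\ forall s, 0 <= s <= t -> m + 1 <= hfun j q s) = Y.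
  apply: the_max_eq.
    split; first by rewrite Y0 (ltW YT1).
    by move=> s /andP [s0 sY]; apply: (proj2 (HY Y Y0 (ltW YT1)) (lexx Y)).
  move=> t [/andP [t0 tT1] H]; apply: (proj1 (HY t t0 tT1)) => s s0 st.
  by apply: H; rewrite s0 st.
have e0' : the_max (fun t => 0 <= t <= T1 /\ forall s, 0 <= s <= t -> m + 1 <= hfun j q' s) = Y.
  apply: the_max_eq.
    split; first by rewrite Y0 (ltW YT1).
    move=> s2 /andP [s20 s2Y]; rewrite hg; last by rewrite /in01 s20 /=; lra.
    by apply: (proj2 (HY Y Y0 (ltW YT1)) (lexx Y)).
  move=> t [/andP [t0 tT1] H]; apply: (proj1 (HY t t0 tT1)) => s s0 st.
  by rewrite -hg; [apply: H; rewrite s0 st | rewrite /in01 s0 /=; lra].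
rewrite e0 e0'.
have Y01 : in01 Y by rewrite /in01 Y0 /=; lra.
split; first by apply: R_shift.
split.
  apply: (R_Inv (conj (ex_intro _ L HL) q0)) => //.
  rewrite refl_cont.
  rewrite -/(hfun j q T1) -/(hfun j q Y) gY gT1.
  have -> : m - (m + 1) = -1 by ring.
  by rewrite scaleN1r opprK.
apply: (R_Inv (conj (ex_intro _ L' HL') q0')) => //.
rewrite refl_cont.
rewrite -/(hfun j q' T1) -/(hfun j q' Y) !hg // gY gT1.
have -> : m - (m + 1) = -1 by ring.
by rewrite scaleN1r opprK.
Qed.
End Step.
Lemma obind_orel (T : Type) (R : T -> T -> Prop) (f : T -> option T) x y :
  (forall u v, R u v -> orel R (f u) (f v)) -> orel R x y -> orel R (obind f x) (obind f y).
Proof. by move=> Hf; case: x; case: y => //= u v; apply: Hf. Qed.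

Lemma iter_orel (T : Type) (R : T -> T -> Prop) (f : T -> option T) n x y :
  (forall u v, R u v -> orel R (f u) (f v)) -> orel R x y ->
  orel R (iter n (obind f) x) (iter n (obind f) y).
Proof. by move=> Hf; elim: n => //= n IH Hxy; apply: obind_orel => //; apply: IH. Qed.

Unset Implicit Arguments.
Theorem lemma2p27 (I : finType) (i0 : I) (A : I -> I -> int) (a av : I -> nat)
  (Haff : affine_datum i0 A a av)
  (p p' : path_ I) (F : rat -> rat^o)
  (Hp : is_LS_path i0 a p) (Hp' : is_LS_path i0 a p')
  (HF : piecewise_linear F) (HF0 : F 0 = 0) (HF1 : a0 i0 a * F 1 \is a Num.int)
  (Hpp : forall t, in01 t -> p t = p' t + F t *: delta I) :
  forall w : seq I, orel (shifted_by F) (S_word i0 A a w p) (S_word i0 A a w p').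
Proof.
have HS : forall j u v, Rel F u v -> orel (Rel F) (S_op i0 A a j u) (S_op i0 A a j v).
  move=> j u v Huv; have [Hs _] := Huv.
  have o1 : in01 1 by rewrite /in01 ler01 lexx.
  have e : pairh (v 1) j = pairh (u 1) j by have := hfun_sh j Hs o1.
  rewrite /S_op /= e; case: ifP => _; apply: iter_orel => //.
    by move=> ? ?; apply: f_step.
  by move=> ? ?; apply: e_step.
have H0 : Rel F p p'.
  case: Hp => [/PL_PLv HL H0 _]; case: Hp' => [/PL_PLv HL' H0' _].
  by split => //; split; split.
move=> w.
suff : orel (Rel F) (S_word i0 A a w p) (S_word i0 A a w p').
  by case: (S_word _ _ _ _ _); case: (S_word _ _ _ _ _) => //= ? ? [].
elim: w => [//|j w IH] /=.
by apply: obind_orel => // u v; apply: HS.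
Qed.
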